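(* Let $X,Y$ be complex Banach spaces, let $\emptyset\ne I\subseteq\mathbb R^n$ be closed with $I+I\subseteq I$, let $\mathcal B$ be a family of compact subsets of $X$ such that every $x\in X$ belongs to some $B\in\mathcal B$, and let $F:I\times X\to Y$ be Bohr $\mathcal B$-almost periodic. Suppose that: for every $l>0$ there exist $\mathbf t_0\in I$ and $k>0$ such that for every $\mathbf t\in I$ there exists $\mathbf t_0'\in I$ such that for every $\mathbf t_0''\in B(\mathbf t_0',l)\cap I$ we have $\mathbf t-\mathbf t_0''\in B(\mathbf t_0,kl)\cap I$. Then for each $B\in\mathcal B$ the set $\{F(\mathbf t;x):\mathbf t\in I,\ x\in B\}$ is relatively compact in $Y$; in particular $\sup_{\mathbf t\in I,x\in B}\|F(\mathbf t;x)\|_Y<\infty$.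
   Context: $B(\mathbf t_0,l)=\{\mathbf t\in\mathbb R^n:|\mathbf t-\mathbf t_0|\le l\}$ (Euclidean norm). For $I$ with $I+I\subseteq I$, a continuous $F:I\times X\to Y$ is Bohr $\mathcal B$-almost periodic if for every $B\in\mathcal B$ and $\epsilon>0$ there exists $l>0$ such that for each $\mathbf t_0\in I$ there exists $\tau\in B(\mathbf t_0,l)\cap I$ with $\|F(\mathbf t+\tau;x)-F(\mathbf t;x)\|_Y\le\epsilon$ for all $\mathbf t\in I$, $x\in B$. *)

(* Defs.v *)
From HB Require Import structures.
From mathcomp Require Import all_boot all_order all_algebra.
From mathcomp Require Import all_classical all_reals all_analysis.
Set Implicit Arguments. Unset Strict Implicit. Unset Printing Implicit Defensive.
Import Order.TTheory GRing.Theory Num.Theory.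
Import numFieldNormedType.Exports.
Local Open Scope classical_set_scope.
Local Open Scope ring_scope.

Definition eucl_norm (R : realType) (n : nat) (v : 'rV[R]_n) : R :=
  Num.sqrt (\sum_(i < n) (v ord0 i) ^+ 2).

Definition eball (R : realType) (n : nat) (t0 : 'rV[R]_n) (l : R) : set 'rV[R]_n :=
  [set t | eucl_norm (t - t0) <= l].

(* Bohr B-almost periodicity of F : I x X -> Y (the function is given on all
   of R^n x X, only its values on I x X matter). *)
Definition bohr_B_ap (R : realType) (n : nat) (K : numFieldType)
  (X Y : normedModType K) (I : set 'rV[R]_n) (BB : set (set X))
  (F : 'rV[R]_n -> X -> Y) : Prop :=
  {within I `*` [set: X], continuous (fun p : 'rV[R]_n * X => F p.1 p.2)} /\
  forall B, BB B -> forall eps : K, 0 < eps ->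
    exists l : R, 0 < l /\
      forall t0, I t0 -> exists tau, (eball t0 l `&` I) tau /\
        forall t x, I t -> B x -> `|F (t + tau) x - F t x| <= eps.

(* Main.v *)
Require Import Defs.
From HB Require Import structures.
From mathcomp Require Import all_boot all_order all_algebra.
From mathcomp Require Import all_classical all_reals all_analysis.
Import Order.TTheory GRing.Theory Num.Theory.
Import numFieldNormedType.Exports.
Local Open Scope classical_set_scope.
Local Open Scope ring_scope.
Lemma norm_le_eucl (R : realType) (n : nat) (v : 'rV[R]_n) : `|v| <= eucl_norm v.
Proof.
rewrite [leLHS]/Num.norm /= mx_normrE.
apply: bigmax_le => [|[i j] _ /=]; first by rewrite /eucl_norm sqrtr_ge0.
rewrite (ord1 i) /eucl_norm -sqrtr_sqr ler_sqrt; last by apply: sumr_ge0 => k _; rewrite sqr_ge0.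
rewrite (bigD1 j) //= lerDl; apply: sumr_ge0 => k _; exact: sqr_ge0.
Qed.
Lemma compact_closure_bounded (K : numFieldType) (Y : normedModType K) (A : set Y) :
  compact (closure A) -> exists M : K, forall y, A y -> `|y| <= M.
Proof.
move=> cA.
apply: contrapT => nb.
have nb' : forall M : K, M \is Num.real -> exists y, A y /\ M < `|y|.
  move=> M Mr; apply: contrapT => h; apply: nb; exists M => y Ay.
  apply: contrapT => hy; apply: h; exists y; split => //.
  by rewrite real_ltNge // ?normr_real //; apply/negP.
pose G := filter_from [set M : K | M \is Num.real] (fun M => [set y | A y /\ M < `|y|]).
have GF : ProperFilter G.
  apply: filter_from_proper; last first.
    by move=> M Mr; have [y [Ay My]] := nb' M Mr; exists y.
  apply: filter_from_filter; first by exists 0; rewrite /= real0.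
  move=> M1 M2 M1r M2r; exists (`|M1| + `|M2|); first by rewrite /= realD ?normr_real.
  move=> y [Ay h]; split; split => //; apply: le_lt_trans h.
    by apply: le_trans (real_ler_norm M1r) _; rewrite lerDl.
  by apply: le_trans (real_ler_norm M2r) _; rewrite lerDr.
have GA : G (closure A).
  by exists 0; [rewrite /= real0|move=> y [Ay _]; exact: subset_closure].
have [p [_ clp]] := cA G GF GA.
have : G [set y | A y /\ `|p| + 1 < `|y|].
  by exists (`|p| + 1) => //; rewrite /= realD ?normr_real ?real1.
move=> /(clp _ (ball p 1)) /(_ (nbhsx_ballx p 1 ltr01)) [].
move=> y [[_ hy]]; rewrite -ball_normE /= => hpy.
have : `|y| <= `|p| + `|p - y|.
  by have := ler_normB p (p - y); rewrite subKr.
move=> h; have := lt_le_trans hy h; rewrite ltrD2l.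
by move=> /(lt_trans hpy); rewrite ltxx.
Qed.
Lemma tb_compact (K : numFieldType) (Y : completeNormedModType K) (A : set Y) :
  (forall e : K, 0 < e -> exists C : set Y, compact C /\
     forall a, A a -> exists c, C c /\ `|c - a| < e) ->
  compact (closure A).
Proof.
move=> tb; rewrite compact_ultra => U UU Ucl.
have cU : cauchy U.
  apply: cauchy_exP => e e0.
  have e20 : 0 < e / 2 by rewrite divr_gt0.
  have d0 : 0 < e / 2 / 2 by rewrite divr_gt0.
  have [C [cC hC]] := tb _ d0.
  pose f := fun V : set Y => C `&` [set c | exists y, V y /\ `|c - y| < e / 2].
  pose H := filter_from U f.
  have HF : ProperFilter H.
    apply: filter_from_proper.
      apply: filter_from_filter; first by exists setT; exact: filterT.
      move=> V1 V2 UV1 UV2; exists (V1 `&` V2); first exact: filterI.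
      by move=> c [Cc [y [[y1 y2] hy]]]; split; split => //; exists y.
    move=> V UV; have [y [Vy cly]] := filter_ex (filterI UV Ucl).
    have [a [Aa hya]] := cly _ (nbhsx_ballx y _ d0).
    move: hya; rewrite -ball_normE /= => hya.
    have [c [Cc hca]] := hC a Aa.
    exists c; split => //; exists y; split => //.
    have := ler_distD a c y; move/le_lt_trans; apply.
    by rewrite [ltRHS]splitr ltrD // distrC.
  have HC : H C by exists setT; [exact: filterT|move=> c []].
  have [p [Cp clp]] := cC H HF HC.
  exists p.
  have [//|Unb] := in_ultra_setVsetC (ball p e) UU.
  have [c [[Cc [y [nby hcy]]] hpc]] :=
    clp _ (ball p (e / 2)) (ex_intro2 _ _ _ Unb (fun x h => h)) (nbhsx_ballx p _ e20).
  exfalso; apply: nby; move: hpc; rewrite -!ball_normE /= => hpc.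
  have := ler_distD c p y; move/le_lt_trans; apply.
  by rewrite [ltRHS]splitr ltrD.
have Up := cauchy_cvg U cU.
exists (lim U); split; last exact: Up.
apply: (@closed_closure _ A) => B /Up UB.
have UB1 : U B by move: UB; rewrite nbhs_filterE.
exact: filter_ex (filterI Ucl UB1).
Qed.

Theorem proposition2p16 (R : realType) (n : nat) (K : numFieldType)
  (X Y : completeNormedModType K) (I : set 'rV[R]_n) (BB : set (set X))
  (F : 'rV[R]_n -> X -> Y) :
  I !=set0 -> closed I ->
  (forall s t, I s -> I t -> I (s + t)) ->
  (forall B, BB B -> compact B) ->
  (forall x : X, exists B, BB B /\ B x) ->
  bohr_B_ap I BB F ->
  (forall l : R, 0 < l -> exists t0, I t0 /\ exists k : R, 0 < k /\
     forall t, I t -> exists t0', I t0' /\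
       forall t0'', (eball t0' l `&` I) t0'' ->
         (eball t0 (k * l) `&` I) (t - t0'')) ->
  forall B, BB B ->
    compact (closure [set y : Y | exists t x, I t /\ B x /\ y = F t x]) /\
    exists M : K, forall t x, I t -> B x -> `|F t x| <= M.
Proof.
move=> I0 Icl Iadd Bcpt Bcov [Fcont Fap] Hl B HB.
have Hc : compact (closure [set y : Y | exists t x, I t /\ B x /\ y = F t x]).
  apply: tb_compact => e e0.
  have e20 : 0 < e / 2 by rewrite divr_gt0.
  have [l [l0 Hl']] := Fap B HB _ e20.
  have [t0 [It0 [k [k0 Hk]]]] := Hl l l0.
  pose K0 := I `&` closed_ball_ Num.norm t0 (k * l).
  have K0cpt : compact K0.
    apply: bounded_closed_compact; last first.
      by apply: closedI => //; exact: closed_closed_ball_.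
    rewrite /bounded_set /= /bounded_near.
    apply: filterS (nbhs_pinfty_ge (num_real (`|t0| + k * l))) => M hM v [_ hv].
    rewrite /=; apply: le_trans hM; have := ler_normB t0 (t0 - v); rewrite subKr => h.
    by apply: le_trans h _; rewrite lerD2l.
  exists ((fun p : 'rV[R]_n * X => F p.1 p.2) @` (K0 `*` B)); split.
    apply: continuous_compact; last exact: compact_setX K0cpt (Bcpt B HB).
    apply: continuous_subspaceW Fcont => -[t x] [[It _] _]; by split.
  move=> a [t [x [It [Bx ->]]]].
  have [t0' [It0' Ht0'']] := Hk t It.
  have [tau [htau hF]] := Hl' t0' It0'.
  have [hs Is] := Ht0'' tau htau.
  exists (F (t - tau) x); split.
    exists (t - tau, x) => //; split => //; split => //.
    rewrite /closed_ball_ /= distrC; exact: le_trans (norm_le_eucl _ _ _) hs.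
  have := hF (t - tau) x Is Bx; rewrite subrK => h.
  rewrite distrC; apply: le_lt_trans h _.
  by rewrite ltr_pdivrMr // ltr_pMr // ltr1n.
split => //.
have [M HM] := compact_closure_bounded _ _ _ Hc.
exists M => t x It Bx; apply: HM; exists t, x; by [].
Qed.
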